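(* Let $L_x, L_y>0$, $L_{xy}\geq 0$, $\mu_x,\mu_y$ with $0<\mu_x\le L_x$, $0<\mu_y\le L_y$, and let $F\in\mathcal{F}(L_x, L_y, L_{xy}, \mu_x, \mu_y)$ (defined in the context). Let $(x^\star,y^\star)$ be the unique saddle point of $F$. Set $L=\max\{L_x, L_y\}$ and $\mu=\min\{\mu_x, \mu_y\}$. If $t\in\left(0, \tfrac{2\mu}{\mu L+L_{xy}^2}\right)$, then for any $(x^1,y^1)\in\mathbb{R}^n\times\mathbb{R}^m$, the point $(x^2,y^2)$ obtained by one step of the gradient descent-ascent method with step length $t$, i.e. $x^{2}=x^1-t\nabla_x F(x^1, y^1)$, $y^{2}=y^1+t\nabla_y F(x^1, y^1)$, satisfies $$ \|x^2-x^\star\|^2+\|y^2-y^\star\|^2\leq \alpha\left(\|x^1-x^\star\|^2+\|y^1-y^\star\|^2\right), $$ where $$ \alpha=1+\tfrac{1}{2}\left(L^2+\mu^2+2L_{xy}^2\right)t^2-(L+\mu)t +\tfrac{1}{2}(L-\mu)t\sqrt{(Lt + \mu t - 2)^2 + 4L_{xy}^2t^2}. $$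
   Context: $F:\mathbb{R}^n\times\mathbb{R}^m\to\mathbb{R}$ is differentiable. $\mathcal{F}(L_x, L_y, L_{xy}, \mu_x, \mu_y)$ denotes the set of such $F$ satisfying, for all $x,x_1,x_2\in\mathbb{R}^n$, $y,y_1,y_2\in\mathbb{R}^m$: $\|\nabla_x F(x_2, y)-\nabla_x F(x_1, y)\|\leq L_x\|x_2-x_1\|$; $\|\nabla_y F(x, y_2)-\nabla_y F(x, y_1)\|\leq L_y\|y_2-y_1\|$; $\|\nabla_x F(x, y_2)-\nabla_x F(x, y_1)\|\leq L_{xy}\|y_2-y_1\|$; $\|\nabla_y F(x_2, y)-\nabla_y F(x_1, y)\|\leq L_{xy}\|x_2-x_1\|$; and $F(\cdot, y)-\tfrac{\mu_x}{2}\|\cdot\|^2$ is convex for every $y$ and $F(x,\cdot)+\tfrac{\mu_y}{2}\|\cdot\|^2$ is concave for every $x$. A saddle point is $(x^\star,y^\star)$ with $F(x^\star, y)\leq F(x^\star, y^\star)\leq F(x, y^\star)$ for all $x,y$; when $\mu_x,\mu_y>0$ it exists and is unique. *)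

(* Defs.v *)
From HB Require Import structures.
From mathcomp Require Import all_boot all_order all_algebra.
From mathcomp Require Import all_classical all_reals all_analysis.
Set Implicit Arguments. Unset Strict Implicit. Unset Printing Implicit Defensive.
Import Order.TTheory GRing.Theory Num.Theory.
Import numFieldNormedType.Exports.
Local Open Scope ring_scope.

(* Euclidean norm on row vectors R^n (the library's default norm on 'rV is the sup norm) *)
Definition enorm {R : realType} {n : nat} (v : 'rV[R]_n) : R :=
  Num.sqrt (\sum_(i < n) (v 0 i) ^+ 2).

Definition gradx {R : realType} {n m : nat} (F : 'rV[R]_n -> 'rV[R]_m -> R)
  (x : 'rV[R]_n) (y : 'rV[R]_m) : 'rV[R]_n :=
  \row_(i < n) derive (fun x' => F x' y) x (delta_mx 0 i : 'rV[R]_n).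

Definition grady {R : realType} {n m : nat} (F : 'rV[R]_n -> 'rV[R]_m -> R)
  (x : 'rV[R]_n) (y : 'rV[R]_m) : 'rV[R]_m :=
  \row_(j < m) derive (fun y' => F x y') y (delta_mx 0 j : 'rV[R]_m).

Definition convex_fun {R : realType} {n : nat} (f : 'rV[R]_n -> R) : Prop :=
  forall (a b : 'rV[R]_n) (l : R), 0 <= l -> l <= 1 ->
    f (l *: a + (1 - l) *: b) <= l * f a + (1 - l) * f b.

Definition concave_fun {R : realType} {n : nat} (f : 'rV[R]_n -> R) : Prop :=
  convex_fun (fun v => - f v).

Definition in_class {R : realType} {n m : nat} (F : 'rV[R]_n -> 'rV[R]_m -> R)
  (Lx Ly Lxy mux muy : R) : Prop :=
  (forall p : 'rV[R]_n * 'rV[R]_m, differentiable (fun q : 'rV[R]_n * 'rV[R]_m => F q.1 q.2) p)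
  /\ (forall x1 x2 y, enorm (gradx F x2 y - gradx F x1 y) <= Lx * enorm (x2 - x1))
  /\ (forall x y1 y2, enorm (grady F x y2 - grady F x y1) <= Ly * enorm (y2 - y1))
  /\ (forall x y1 y2, enorm (gradx F x y2 - gradx F x y1) <= Lxy * enorm (y2 - y1))
  /\ (forall x1 x2 y, enorm (grady F x2 y - grady F x1 y) <= Lxy * enorm (x2 - x1))
  /\ (forall y, convex_fun (fun x => F x y - mux / 2 * enorm x ^+ 2))
  /\ (forall x, concave_fun (fun y => F x y + muy / 2 * enorm y ^+ 2)).

Definition saddle_point {R : realType} {n m : nat} (F : 'rV[R]_n -> 'rV[R]_m -> R)
  (xs : 'rV[R]_n) (ys : 'rV[R]_m) : Prop :=
  forall x y, F xs y <= F xs ys /\ F xs ys <= F x ys.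

(* Main.v *)
Require Import Defs.
From HB Require Import structures.
From mathcomp Require Import all_boot all_order all_algebra.
From mathcomp Require Import all_classical all_reals all_analysis.
From mathcomp Require Import ring lra.
Import Order.TTheory GRing.Theory Num.Theory.
Import numFieldNormedType.Exports.
Local Open Scope ring_scope.


Section Dot.
Context {R : realType} {n : nat}.
Implicit Types u v w : 'rV[R]_n.
Definition dot u v : R := \sum_(i < n) u 0 i * v 0 i.
Lemma dotC u v : dot u v = dot v u.
Proof. by apply: eq_bigr => i _; rewrite mulrC. Qed.
Lemma dotDl u v w : dot (u + v) w = dot u w + dot v w.
Proof. by rewrite /dot -big_split; apply: eq_bigr => i _; rewrite !mxE mulrDl. Qed.
Lemma dotDr u v w : dot w (u + v) = dot w u + dot w v.
Proof. by rewrite dotC dotDl !(dotC w). Qed.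
Lemma dotZl (k : R) u v : dot (k *: u) v = k * dot u v.
Proof. by rewrite /dot mulr_sumr; apply: eq_bigr => i _; rewrite !mxE mulrA. Qed.
Lemma dotZr (k : R) u v : dot v (k *: u) = k * dot v u.
Proof. by rewrite dotC dotZl dotC. Qed.
Lemma dotNl u v : dot (- u) v = - dot u v.
Proof. by rewrite -scaleN1r dotZl mulN1r. Qed.
Lemma dotNr u v : dot v (- u) = - dot v u.
Proof. by rewrite dotC dotNl dotC. Qed.
Lemma dotBl u v w : dot (u - v) w = dot u w - dot v w.
Proof. by rewrite dotDl dotNl. Qed.
Lemma dotBr u v w : dot w (u - v) = dot w u - dot w v.
Proof. by rewrite dotDr dotNr. Qed.
Lemma dot0l u : dot 0 u = 0.
Proof. by rewrite /dot big1 // => i _; rewrite mxE mul0r. Qed.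
Lemma dot0r u : dot u 0 = 0.
Proof. by rewrite dotC dot0l. Qed.
Lemma dot_ge0 u : 0 <= dot u u.
Proof. by apply: sumr_ge0 => i _; rewrite -expr2 sqr_ge0. Qed.
Lemma enorm2 u : enorm u ^+ 2 = dot u u.
Proof. by rewrite /enorm sqr_sqrtr //; apply: sumr_ge0 => i _; rewrite sqr_ge0. Qed.
Lemma enormE u : enorm u = Num.sqrt (dot u u).
Proof. by rewrite /enorm /dot; congr Num.sqrt; apply: eq_bigr => i _; rewrite expr2. Qed.
Lemma enorm_ge0 u : 0 <= enorm u.
Proof. exact: sqrtr_ge0. Qed.
Lemma dot_cs u v : dot u v ^+ 2 <= dot u u * dot v v.
Proof.
have H r : 0 <= r ^+ 2 * dot u u - 2 * r * dot u v + dot v v.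
  have := dot_ge0 (r *: u - v).
  rewrite !(dotBl, dotBr, dotZl, dotZr) (dotC v u); lra.
have [u0|u0] := eqVneq (dot u u) 0.
  have [d0|d0] := eqVneq (dot u v) 0; first by rewrite d0 u0; lra.
  have := H ((dot v v + 1) / (2 * dot u v)).
  have -> : 2 * ((dot v v + 1) / (2 * dot u v)) * dot u v = dot v v + 1.
    by field.
  rewrite u0; lra.
have up : 0 < dot u u by rewrite lt_neqAle eq_sym u0 dot_ge0.
have := H (dot u v / dot u u).
set a := dot u u; set b := dot u v; set c := dot v v => h.
have := mulr_ge0 (ltW up) h.
have -> : a * ((b / a) ^+ 2 * a - 2 * (b / a) * b + c) = a * c - b ^+ 2.
  by field; rewrite gt_eqF.
lra.
Qed.
Lemma dot_le u v : dot u v <= enorm u * enorm v.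
Proof.
rewrite !enormE -sqrtrM ?dot_ge0 //.
have [h|h] := lerP (dot u v) 0.
  by apply: le_trans h _; apply: sqrtr_ge0.
have -> : dot u v = Num.sqrt (dot u v ^+ 2) by rewrite sqrtr_sqr ger0_norm // ltW.
by rewrite ler_sqrt ?dot_cs // mulr_ge0 // dot_ge0.
Qed.
End Dot.

Ltac dexp := rewrite ?(dotDl, dotDr, dotBl, dotBr, dotZl, dotZr, dotNl, dotNr).

Section Grad.
Variable R : realType.

Lemma derive_grad n (f : 'rV[R]_n -> R) x d : differentiable f x ->
  derive f x d = dot (\row_i derive f x (delta_mx 0 i)) d.
Proof.
move=> df; rewrite /dot (deriveE d df).
under eq_bigr => i _ do rewrite mxE (deriveE _ df).
rewrite {1}(row_sum_delta d) linear_sum; apply: eq_bigr => i _.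
by rewrite linearZ /= mulrC.
Qed.

Lemma diffx n m (F : 'rV[R]_n -> 'rV[R]_m -> R) :
  (forall p, differentiable (fun q : 'rV[R]_n * 'rV[R]_m => F q.1 q.2) p) ->
  forall y x, differentiable (fun x' => F x' y) x.
Proof.
move=> HF y x.
have -> : (fun x' => F x' y) =
  (fun q : 'rV[R]_n * 'rV[R]_m => F q.1 q.2) \o (fun x' => (x', y)) by [].
apply: differentiable_comp; last exact: HF.
by apply: differentiable_pair.
Qed.

Lemma diffy n m (F : 'rV[R]_n -> 'rV[R]_m -> R) :
  (forall p, differentiable (fun q : 'rV[R]_n * 'rV[R]_m => F q.1 q.2) p) ->
  forall x y, differentiable (fun y' => F x y') y.
Proof.
move=> HF x y.
have -> : (fun y' => F x y') =
  (fun q : 'rV[R]_n * 'rV[R]_m => F q.1 q.2) \o (fun y' => (x, y')) by [].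
apply: differentiable_comp; last exact: HF.
by apply: differentiable_pair.
Qed.
End Grad.

Local Open Scope classical_set_scope.
Local Open Scope ring_scope.

Section Block.
Context {R : realType} {n : nat}.
Variables (f : 'rV[R]_n -> R) (g : 'rV[R]_n -> 'rV[R]_n).
Hypothesis Hd : forall x d, derivable f x d.
Hypothesis Hg : forall x d, derive f x d = dot (g x) d.

Lemma quot_cvg x d :
  (fun h : R => h^-1 *: ((f \o shift x) (h *: d) - f x)) @ 0^' --> dot (g x) d.
Proof. rewrite -Hg; exact: (Hd x d). Qed.

Lemma first_order_lb (c : R) : 0 <= c ->
  convex_fun (fun x => f x - c / 2 * enorm x ^+ 2) ->
  forall x y, f x + dot (g x) (y - x) + c / 2 * enorm (y - x) ^+ 2 <= f y.
Proof.
move=> c0 Hc x y.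
have -> : y = (y - x) + x by rewrite subrK.
move: (y - x) => d; rewrite addrK.
pose r := fun h : R => (f (d + x) - f x - c / 2 * dot d d) + (c / 2 * dot d d) * h.
have rc : r @ 0^'+ --> (f (d + x) - f x - c / 2 * dot d d).
  apply: cvg_at_right_filter.
  rewrite -[X in _ --> X]addr0.
  apply: cvgD; first exact: cvg_cst.
  rewrite -[X in _ --> X](mulr0 (c / 2 * dot d d)).
  exact: cvgMr.
have qc := cvg_dnbhs_at_right (quot_cvg x d).
have key : dot (g x) d <= f (d + x) - f x - c / 2 * dot d d.
  apply: (ler_cvg_to qc rc).
  near=> h.
  have h0 : 0 < h by near: h; exact: nbhs_right_gt.
  have h1 : h < 1 by near: h; exact: nbhs_right_lt.
  have cv := Hc (d + x) x h (ltW h0) (ltW h1).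
  have E : h *: (d + x) + (1 - h) *: x = h *: d + x.
    rewrite scalerDr scalerBl scale1r -addrA; congr (_ + _).
    by rewrite addrC subrK.
  rewrite E !enorm2 !(dotDl, dotDr, dotZl, dotZr) in cv.
  rewrite ?(dotC x d) in cv.
  move: cv; rewrite /=; move=> cv.
  rewrite /= -[_ *: _]/(h^-1 * _) ler_pdivrMl // /r.
  nra.
rewrite enorm2; lra.
Unshelve. all: by end_near.
Qed.

Lemma scaleRE (k a : R) : k *: a = k * a.
Proof. by []. Qed.

Lemma line_is_derive (x d : 'rV[R]_n) (s : R) :
  is_derive s (1 : R) (fun s : R => f (s *: d + x)) (dot (g (s *: d + x)) d).
Proof.
have E : (fun h : R => h^-1 *: (((fun s : R => f (s *: d + x)) \o shift s) (h *: 1)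
             - f (s *: d + x)))
       = (fun h : R => h^-1 *: ((f \o shift (s *: d + x)) (h *: d) - f (s *: d + x))).
  apply: funext => h /=.
  by rewrite -[h%:A]/(h * 1) mulr1 scalerDl addrA.
split.
- rewrite /derivable E; exact: Hd.
- rewrite /derive E; exact: Hg.
Qed.

Lemma enormZ (k : R) (v : 'rV[R]_n) : enorm (k *: v) = `|k| * enorm v.
Proof.
by rewrite !enormE dotZl dotZr mulrA -expr2 sqrtrM ?sqr_ge0 // sqrtr_sqr.
Qed.

Lemma descent (L : R) : 0 <= L ->
  (forall x1 x2, enorm (g x2 - g x1) <= L * enorm (x2 - x1)) ->
  forall x y, f y <= f x + dot (g x) (y - x) + L / 2 * enorm (y - x) ^+ 2.
Proof.
move=> L0 HL x y.
have -> : y = (y - x) + x by rewrite subrK.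
move: (y - x) => d; rewrite addrK.
pose D0 := dot (g x) d; pose k := L / 2 * dot d d.
pose F := (fun s : R => f (s *: d + x)).
pose P := (D0 \*: (@id R)) + (k \*: ((@id R) ^+ 2)).
have dpsi s := is_deriveB (line_is_derive x d s)
  (is_deriveD (is_deriveZ D0 (is_derive_id s 1))
              (is_deriveZ k (is_deriveX 2 (is_derive_id s 1)))).
have hom : {in `[0, 1] &, {homo (F - P) : a b /~ a <= b}}.
  apply: ler0_derive1_le_cc.
  - by move=> s _; exact: (@ex_derive _ _ _ _ _ _ _ (dpsi s)).
  - move=> s; rewrite in_itv /= => /andP[s0 s1].
    rewrite derive1E (@derive_val _ _ _ _ _ _ _ (dpsi s)).
    have h1 : dot (g (s *: d + x)) d - D0 <= L * s * dot d d.
      rewrite /D0 -dotBl.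
      apply: le_trans (dot_le _ _) _.
      have := HL x (s *: d + x); rewrite addrK enormZ (ger0_norm (ltW s0)) => h.
      apply: le_trans (ler_wpM2r (enorm_ge0 _) h) _.
      by rewrite -enorm2 expr2 !mulrA.
    rewrite /k /= !scaleRE !mulr1 expr1; move: h1; lra.
  - apply: derivable_within_continuous => s _.
    exact: (@ex_derive _ _ _ _ _ _ _ (dpsi s)).
have i0 : (0:R) \in `[0, 1] by rewrite in_itv /= ler01 lexx.
have i1 : (1:R) \in `[0, 1] by rewrite in_itv /= ler01 lexx.
have := hom 1 0 i1 i0 ler01.
rewrite /F /P !fctE /= scale0r add0r scale1r !scaleRE enorm2 /k /D0 expr1n expr0n /= !mulr0 !mulr1 addr0 subr0.
lra.
Qed.
End Block.

Local Close Scope classical_set_scope.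

Local Open Scope classical_set_scope.
Local Open Scope ring_scope.


Section Interp.
Context {R : realType} {n : nat}.
Variables (f : 'rV[R]_n -> R) (g : 'rV[R]_n -> 'rV[R]_n) (mu L : R).
Hypothesis muL : mu <= L.
Hypothesis Hi : forall x y, f x + dot (g x) (y - x) + mu / 2 * enorm (y - x) ^+ 2 <= f y.
Hypothesis Hii : forall x y, f y <= f x + dot (g x) (y - x) + L / 2 * enorm (y - x) ^+ 2.

Definition Dq x y := f y - f x - dot (g x) (y - x) - mu / 2 * dot (y - x) (y - x).

Lemma Dq_ge0 x y : 0 <= Dq x y.
Proof. have := Hi x y; rewrite /Dq enorm2; lra. Qed.

Lemma Dq_le x y : Dq x y <= (L - mu) / 2 * dot (y - x) (y - x).
Proof. have := Hii x y; rewrite /Dq enorm2; lra. Qed.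

Lemma interp x y :
  dot (g y - g x - mu *: (y - x)) (g y - g x - mu *: (y - x)) <= 2 * (L - mu) * Dq x y.
Proof.
set G := g y - g x - mu *: (y - x).
have GE : G = g y - g x - mu *: (y - x) by [].
clearbody G.
have Hs : forall s : R, s * dot G G - (L - mu) / 2 * (s * s) * dot G G <= Dq x y.
  move=> s.
  have := Hi x (y - s *: G); have := Hii y (y - s *: G).
  have e1 : y - s *: G - x = (y - x) - s *: G by apply/rowP => i; rewrite !mxE; ring.
  have e2 : y - s *: G - y = - (s *: G) by apply/rowP => i; rewrite !mxE; ring.
  have gyE : g y = g x + mu *: (y - x) + G by rewrite GE; apply/rowP => i; rewrite !mxE; ring.
  rewrite e1 e2 !enorm2 gyE /Dq.
  dexp.
  rewrite ?(dotC y (g x)) ?(dotC x (g x)) ?(dotC G (g x)) ?(dotC x y) ?(dotC G x) ?(dotC G y).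
  lra.
have GG0 := dot_ge0 G.
have [K0|K0] := eqVneq (L - mu) 0.
  rewrite K0 mulr0 mul0r.
  have [G0|G0] := eqVneq (dot G G) 0; first by rewrite G0.
  have := Hs ((`|Dq x y| + 1) / dot G G).
  rewrite K0 !mul0r subr0 divfK //.
  have := ler_norm (Dq x y); lra.
have Kp : 0 < L - mu by rewrite lt_neqAle eq_sym K0 subr_ge0 muL.
have := Hs (L - mu)^-1.
have -> : (L - mu)^-1 * dot G G - (L - mu) / 2 * ((L - mu)^-1 * (L - mu)^-1) * dot G G
   = dot G G / (2 * (L - mu)) by field; rewrite gt_eqF.
rewrite ler_pdivrMr ?mulr_gt0 //; lra.
Qed.
End Interp.

Local Close Scope classical_set_scope.

Lemma sq_le_le (R : realType) (x y : R) : 0 <= y -> x ^+ 2 <= y ^+ 2 -> x <= y.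
Proof. move=> y0 h; nra. Qed.

Lemma scalar_final (R : realType) (Z2 s m t l K Xb rho A B C : R) :
  0 <= Z2 -> 0 <= s -> s ^+ 2 = m ^+ 2 + t ^+ 2 * l ^+ 2 -> 0 < t -> 0 <= K ->
  0 <= A -> 0 <= B ->
  A <= s ^+ 2 * Z2 - 2 * m * t * Xb ->
  B <= K ^+ 2 * Z2 / 4 - rho ->
  K * Xb <= rho -> - (K * Xb) <= rho ->
  Xb <= K * Z2 / 2 -> - Xb <= K * Z2 / 2 ->
  C ^+ 2 <= A * B ->
  A - 2 * t * C + t ^+ 2 * B <= (s + t * K / 2) ^+ 2 * Z2.
Proof.
move=> Z0 s0 sE t0 K0 A0 B0 h1 h2 h3 h3' h4 h4' h5.
have ms : `|m| <= s.
  apply: sq_le_le => //; rewrite -normrX ger0_norm ?sqr_ge0 // sE; nra.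
pose nx := Num.sqrt A; pose ny := Num.sqrt B; pose zn := Num.sqrt Z2.
have nxE : nx ^+ 2 = A by rewrite sqr_sqrtr.
have nyE : ny ^+ 2 = B by rewrite sqr_sqrtr.
have znE : zn ^+ 2 = Z2 by rewrite sqr_sqrtr.
have nx0 : 0 <= nx := sqrtr_ge0 _.
have ny0 : 0 <= ny := sqrtr_ge0 _.
have zn0 : 0 <= zn := sqrtr_ge0 _.
have hC : - C <= nx * ny.
  apply: le_trans (ler_norm _) _; rewrite normrN.
  apply: sq_le_le; first exact: mulr_ge0.
  by rewrite -normrX ger0_norm ?sqr_ge0 // exprMn nxE nyE.
have step : nx + t * ny <= (s + t * K / 2) * zn.
  have [z0|zp] := eqVneq zn 0.
    have Z20 : Z2 = 0 by rewrite -znE z0 expr0n.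
    have X0 : Xb = 0 by move: h4 h4'; rewrite Z20 mulr0 mul0r; lra.
    have A00 : A = 0 by move: h1; rewrite Z20 X0 !mulr0 subr0; lra.
    have r0 : 0 <= rho by move: h3; rewrite X0 mulr0.
    have B00 : B = 0 by move: h2; rewrite Z20 mulr0 mul0r; lra.
    rewrite z0 mulr0 /nx /ny A00 B00 sqrtr0 mulr0 addr0 //.
  have zpos : 0 < zn by rewrite lt_neqAle eq_sym zp zn0.
  pose ax := `|Xb|.
  have axE : ax <= K * Z2 / 2 by rewrite /ax; case: (ler0P Xb) => _; lra.
  have axr : K * ax <= rho by rewrite /ax; case: (ler0P Xb) => _; lra.
  pose e := t * ax / zn.
  have eE : e * zn = t * ax by rewrite /e divfK // gt_eqF.
  have ax0 : 0 <= ax := normr_ge0 _.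
  have e0 : 0 <= e by rewrite /e divr_ge0 // mulr_ge0 // ltW.
  have mX : - (2 * m * t * Xb) <= 2 * s * t * ax.
    have : - (m * Xb) <= s * ax.
      apply: le_trans (ler_norm _) _; rewrite normrN normrM.
      by apply: ler_wpM2r => //; exact: normr_ge0.
    nra.
  clearbody e ax.
  have hx : nx <= s * zn + e.
    apply: sq_le_le; first by apply: addr_ge0 => //; apply: mulr_ge0.
    have -> : (s * zn + e) ^+ 2 = s ^+ 2 * Z2 + 2 * s * (e * zn) + e ^+ 2.
      by rewrite -znE; ring.
    rewrite nxE eE; nra.
  have hy : t * ny <= t * K * zn / 2 - e.
    have le : e <= t * K * zn / 2.
      rewrite -(ler_pM2r zpos) eE.
      have -> : t * K * zn / 2 * zn = t * (K * Z2 / 2) by rewrite -znE; ring.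
      by apply: ler_wpM2l; [exact: ltW|].
    apply: sq_le_le; first lra.
    rewrite exprMn nyE.
    have -> : (t * K * zn / 2 - e) ^+ 2 = t ^+ 2 * K ^+ 2 * Z2 / 4 - t * K * (e * zn) + e ^+ 2.
      by rewrite -znE; field.
    rewrite eE.
    have : t ^+ 2 * B <= t ^+ 2 * (K ^+ 2 * Z2 / 4 - K * ax).
      by apply: ler_wpM2l; [rewrite sqr_ge0| lra].
    nra.
  have -> : (s + t * K / 2) * zn = s * zn + t * K * zn / 2 by ring.
  lra.
have : A - 2 * t * C + t ^+ 2 * B <= (nx + t * ny) ^+ 2.
  rewrite sqrrD nxE exprMn nyE; nra.
move=> H; apply: le_trans H _.
rewrite -znE -exprMn.
have hh : 0 <= nx + t * ny by apply: addr_ge0 => //; apply: mulr_ge0 => //; exact: ltW.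
nra.
Qed.


Lemma cs2 (R : realType) (A1 B1 C1 A2 B2 C2 : R) :
  0 <= A1 -> 0 <= B1 -> 0 <= A2 -> 0 <= B2 ->
  C1 ^+ 2 <= A1 * B1 -> C2 ^+ 2 <= A2 * B2 ->
  (C1 + C2) ^+ 2 <= (A1 + A2) * (B1 + B2).
Proof.
move=> a1 b1 a2 b2 h1 h2.
have p : (C1 * C2) ^+ 2 <= (A1 * B2) * (A2 * B1).
  rewrite exprMn.
  have -> : A1 * B2 * (A2 * B1) = (A1 * B1) * (A2 * B2) by ring.
  apply: ler_pM => //; exact: sqr_ge0.
have q : 2 * `|C1 * C2| <= A1 * B2 + A2 * B1.
  apply: sq_le_le; first by apply: addr_ge0; apply: mulr_ge0.
  rewrite exprMn -normrX ger0_norm ?sqr_ge0 //.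
  have : 0 <= (A1 * B2 - A2 * B1) ^+ 2 := sqr_ge0 _.
  nra.
have := ler_norm (C1 * C2).
nra.
Qed.

Ltac dn a G u w b H v z := rewrite ?(dotC G a) ?(dotC u a) ?(dotC w a) ?(dotC u G) ?(dotC w G) ?(dotC w u)
  ?(dotC H b) ?(dotC v b) ?(dotC z b) ?(dotC v H) ?(dotC z H) ?(dotC z v).

Section Final.
Context {R : realType} {n m : nat}.

Lemma final_alg (a G u w : 'rV[R]_n) (b H v z : 'rV[R]_m)
  (F0 F1 F2 F3 mu L l t : R)
  (d12 d21 d03 d30 e13 e31 e02 e20 : R) :
  0 <= mu -> mu <= L -> 0 <= l -> 0 < t ->
  d12 = F2 - F1 + dot G a - mu / 2 * dot a a ->
  d21 = F1 - F2 - dot u a - mu / 2 * dot a a ->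
  d03 = F3 - F0 - mu / 2 * dot a a ->
  d30 = F0 - F3 + dot w a - mu / 2 * dot a a ->
  e13 = F1 - F3 - dot H b - mu / 2 * dot b b ->
  e31 = F3 - F1 + dot z b - mu / 2 * dot b b ->
  e02 = F0 - F2 - mu / 2 * dot b b ->
  e20 = F2 - F0 - dot v b - mu / 2 * dot b b ->
  0 <= d12 -> d12 <= (L - mu) / 2 * dot a a ->
  0 <= d21 -> d21 <= (L - mu) / 2 * dot a a ->
  0 <= d03 -> d03 <= (L - mu) / 2 * dot a a ->
  0 <= d30 -> d30 <= (L - mu) / 2 * dot a a ->
  0 <= e13 -> e13 <= (L - mu) / 2 * dot b b ->
  0 <= e31 -> e31 <= (L - mu) / 2 * dot b b ->
  0 <= e02 -> e02 <= (L - mu) / 2 * dot b b ->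
  0 <= e20 -> e20 <= (L - mu) / 2 * dot b b ->
  dot (G - u - mu *: a) (G - u - mu *: a) <= 2 * (L - mu) * d12 ->
  dot (G - u - mu *: a) (G - u - mu *: a) <= 2 * (L - mu) * d21 ->
  dot (w - mu *: a) (w - mu *: a) <= 2 * (L - mu) * d03 ->
  dot (w - mu *: a) (w - mu *: a) <= 2 * (L - mu) * d30 ->
  dot (z - H - mu *: b) (z - H - mu *: b) <= 2 * (L - mu) * e13 ->
  dot (z - H - mu *: b) (z - H - mu *: b) <= 2 * (L - mu) * e31 ->
  dot (v + mu *: b) (v + mu *: b) <= 2 * (L - mu) * e02 ->
  dot (v + mu *: b) (v + mu *: b) <= 2 * (L - mu) * e20 ->
  dot u u <= l ^+ 2 * dot b b ->
  dot (G - w) (G - w) <= l ^+ 2 * dot b b ->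
  dot z z <= l ^+ 2 * dot a a ->
  dot (v - H) (v - H) <= l ^+ 2 * dot a a ->
  dot (a - t *: G) (a - t *: G) + dot (b + t *: H) (b + t *: H) <=
  (Num.sqrt ((1 - t * (mu + L) / 2) ^+ 2 + t ^+ 2 * l ^+ 2) + t * (L - mu) / 2) ^+ 2
    * (dot a a + dot b b).
Proof.
move=> mu0 muL l0 t0 E12 E21 E03 E30 F13 F31 F02 F20
  g12 g12' g21 g21' g03 g03' g30 g30' f13 f13' f31 f31' f02 f02' f20 f20'
  P12 P21 W03 W30 Q13 Q31 V02 V20 Lu Lgw Lz Lhv.
have K0 : 0 <= L - mu by rewrite subr_ge0.
have na0 : 0 <= dot a a := dot_ge0 a.
have nb0 : 0 <= dot b b := dot_ge0 b.
pose S := dot (G - u - mu *: a) (G - u - mu *: a) + dot (w - mu *: a) (w - mu *: a)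
  + dot (z - H - mu *: b) (z - H - mu *: b) + dot (v + mu *: b) (v + mu *: b).
pose g1 := dot G a - dot H b - mu * (dot a a + dot b b).
pose g2 := dot w a - dot u a + dot z b - dot v b - mu * (dot a a + dot b b).
have hS1 : S <= 2 * (L - mu) * g1.
  rewrite /S /g1; rewrite E12 E03 F13 F02 in P12 W03 Q13 V02; lra.
have hS2 : S <= 2 * (L - mu) * g2.
  rewrite /S /g2; rewrite E21 E30 F31 F20 in P21 W30 Q31 V20; lra.
have hg1 : 0 <= g1 /\ g1 <= (L - mu) * (dot a a + dot b b).
  rewrite /g1; rewrite E12 E03 F13 F02 in g12 g12' g03 g03' f13 f13' f02 f02'; lra.
have hg2 : 0 <= g2 /\ g2 <= (L - mu) * (dot a a + dot b b).
  rewrite /g2; rewrite E21 E30 F31 F20 in g21 g21' g30 g30' f31 f31' f20 f20'; lra.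
have [mm mmE] : exists mm : R, mm = 1 - t * (mu + L) / 2 by exists (1 - t * (mu + L) / 2).
rewrite -mmE.
set s := Num.sqrt _.
have s0 : 0 <= s := sqrtr_ge0 _.
have sE : s ^+ 2 = mm ^+ 2 + t ^+ 2 * l ^+ 2.
  by rewrite sqr_sqrtr // addr_ge0 // ?sqr_ge0 // mulr_ge0 // sqr_ge0.
clearbody s.
pose T1x := (1/2 : R) *: ((G - u - mu *: a) + (w - mu *: a)) - ((L - mu) / 2) *: a.
pose T1y := (1/2 : R) *: ((z - H - mu *: b) - (v + mu *: b)) - ((L - mu) / 2) *: b.
pose T2x := (1/2 : R) *: (u + (G - w)).
pose T2y := (1/2 : R) *: ((v - H) - z).
pose Nx := mm *: a - t *: T2x.
pose Ny := mm *: b - t *: T2y.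
have eqx : a - t *: G = Nx - t *: T1x.
  by rewrite /Nx /T1x /T2x mmE; apply/rowP => i; rewrite !mxE; field.
have eqy : b + t *: H = Ny - t *: T1y.
  by rewrite /Ny /T1y /T2y mmE; apply/rowP => i; rewrite !mxE; field.
have tt0 : 0 <= t ^+ 2 := sqr_ge0 t.
pose Xb := (dot a (u + (G - w)) + dot b ((v - H) - z)) / 2.
have hA : dot Nx Nx + dot Ny Ny <= s ^+ 2 * (dot a a + dot b b) - 2 * mm * t * Xb.
  have n1 := mulr_ge0 tt0 (dot_ge0 (u - (G - w))).
  have n2 := mulr_ge0 tt0 (dot_ge0 ((v - H) + z)).
  have l1 := ler_wpM2l tt0 Lu.
  have l2 := ler_wpM2l tt0 Lgw.
  have l3 := ler_wpM2l tt0 Lz.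
  have l4 := ler_wpM2l tt0 Lhv.
  rewrite sE /Xb /Nx /Ny /T2x.
  move: n1 n2 l1 l2 l3 l4; dexp; dn a G u w b H v z.
  move=> *; lra.
pose rho := ((L - mu) * (g1 + g2) - S) / 2.
have hB : dot T1x T1x + dot T1y T1y <= (L - mu) ^+ 2 * (dot a a + dot b b) / 4 - rho.
  have n1 := dot_ge0 ((G - u - mu *: a) - (w - mu *: a)).
  have n2 := dot_ge0 ((z - H - mu *: b) + (v + mu *: b)).
  rewrite /rho /S /g1 /g2 /T1x /T1y.
  move: n1 n2; dexp; dn a G u w b H v z.
  move=> *; lra.
have hX : Xb = (g1 - g2) / 2.
  rewrite /Xb /g1 /g2; dexp; dn a G u w b H v z; lra.
have h3 : (L - mu) * Xb <= rho by rewrite hX /rho; lra.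
have h3' : - ((L - mu) * Xb) <= rho by rewrite hX /rho; lra.
have h4 : Xb <= (L - mu) * (dot a a + dot b b) / 2 by rewrite hX; lra.
have h4' : - Xb <= (L - mu) * (dot a a + dot b b) / 2 by rewrite hX; lra.
have hC : (dot Nx T1x + dot Ny T1y) ^+ 2 <=
    (dot Nx Nx + dot Ny Ny) * (dot T1x T1x + dot T1y T1y).
  by apply: cs2; rewrite ?dot_ge0 ?dot_cs.
clearbody Nx Ny T1x T1y.
have := @scalar_final R _ _ _ _ _ _ _ _ _ _ _ (addr_ge0 na0 nb0) s0 sE t0 K0 (addr_ge0 (dot_ge0 Nx) (dot_ge0 Ny))
  (addr_ge0 (dot_ge0 T1x) (dot_ge0 T1y)) hA hB h3 h3' h4 h4' hC.
rewrite eqx eqy; dexp; rewrite (dotC T1x Nx) (dotC T1y Ny).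
move=> *; lra.
Qed.
End Final.

Local Open Scope classical_set_scope.
Local Open Scope ring_scope.

Section Glue.
Context {R : realType}.

Lemma dot_eq0 n (v : 'rV[R]_n) : dot v v = 0 -> v = 0.
Proof.
move=> h; apply/rowP => i; rewrite mxE.
have H0 : forall j : 'I_n, predT j -> 0 <= v 0 j * v 0 j.
  by move=> j _; rewrite -expr2 sqr_ge0.
have := @psumr_eq0P _ _ predT (fun i => v 0 i * v 0 i) H0 h i isT.
by move/eqP; rewrite mulf_eq0 orbb => /eqP.
Qed.

Lemma enormN n (v : 'rV[R]_n) : enorm (- v) = enorm v.
Proof. by rewrite !enormE dotNl dotNr opprK. Qed.

Lemma dotNN n (v : 'rV[R]_n) : dot (- v) (- v) = dot v v.
Proof. by rewrite dotNl dotNr opprK. Qed.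

Lemma block_facts n (f : 'rV[R]_n -> R) (g : 'rV[R]_n -> 'rV[R]_n) (c Lb mu L : R) :
  (forall x d, derivable f x d) ->
  (forall x d, derive f x d = dot (g x) d) ->
  0 <= mu -> mu <= c -> Lb <= L -> 0 <= Lb ->
  convex_fun (fun x => f x - c / 2 * enorm x ^+ 2) ->
  (forall x1 x2, enorm (g x2 - g x1) <= Lb * enorm (x2 - x1)) ->
  (forall x y, f x + dot (g x) (y - x) + mu / 2 * enorm (y - x) ^+ 2 <= f y) /\
  (forall x y, f y <= f x + dot (g x) (y - x) + L / 2 * enorm (y - x) ^+ 2).
Proof.
move=> Hd Hg mu0 muc LbL Lb0 Hc HL; split=> x y.
  have c0 : 0 <= c by apply: le_trans muc.
  have := @first_order_lb _ _ f g Hd Hg c c0 Hc x y.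
  have : mu / 2 * enorm (y - x) ^+ 2 <= c / 2 * enorm (y - x) ^+ 2.
    by apply: ler_wpM2r; [exact: sqr_ge0 | lra].
  lra.
have := @descent _ _ f g Hd Hg Lb Lb0 HL x y.
have : Lb / 2 * enorm (y - x) ^+ 2 <= L / 2 * enorm (y - x) ^+ 2.
  by apply: ler_wpM2r; [exact: sqr_ge0 | lra].
lra.
Qed.

Lemma grad_zero n (f : 'rV[R]_n -> R) (g : 'rV[R]_n -> 'rV[R]_n) (L : R) (x0 : 'rV[R]_n) :
  0 < L ->
  (forall x y, f y <= f x + dot (g x) (y - x) + L / 2 * enorm (y - x) ^+ 2) ->
  (forall x, f x0 <= f x) -> g x0 = 0.
Proof.
move=> L0 Hii Hmin; apply: dot_eq0.
have := Hii x0 (x0 - L^-1 *: g x0).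
have := Hmin (x0 - L^-1 *: g x0).
have -> : x0 - L^-1 *: g x0 - x0 = - (L^-1 *: g x0) by rewrite addrAC subrr add0r.
rewrite enorm2 dotNr dotNN !dotZr !dotZl.
have gg := dot_ge0 (g x0).
move=> h1 h2.
have : L^-1 * dot (g x0) (g x0) <= L / 2 * (L^-1 * (L^-1 * dot (g x0) (g x0))) by lra.
have -> : L / 2 * (L^-1 * (L^-1 * dot (g x0) (g x0))) = L^-1 * dot (g x0) (g x0) / 2.
  by field; rewrite gt_eqF.
have Li : 0 < L^-1 by rewrite invr_gt0.
move=> h; apply/eqP; rewrite eq_le gg andbT.
have : L^-1 * dot (g x0) (g x0) <= 0 by lra.
by rewrite pmulr_rle0.
Qed.
Lemma pair_facts n (f : 'rV[R]_n -> R) (g : 'rV[R]_n -> 'rV[R]_n) (mu L : R) :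
  mu <= L ->
  (forall x y, f x + dot (g x) (y - x) + mu / 2 * enorm (y - x) ^+ 2 <= f y) ->
  (forall x y, f y <= f x + dot (g x) (y - x) + L / 2 * enorm (y - x) ^+ 2) ->
  forall p q,
  (0 <= f q - f p + dot (g p) (p - q) - mu / 2 * dot (p - q) (p - q)) /\
  (f q - f p + dot (g p) (p - q) - mu / 2 * dot (p - q) (p - q)
        <= (L - mu) / 2 * dot (p - q) (p - q)) /\
  (dot (g p - g q - mu *: (p - q)) (g p - g q - mu *: (p - q)) <=
        2 * (L - mu) * (f q - f p + dot (g p) (p - q) - mu / 2 * dot (p - q) (p - q))) /\
  (0 <= f p - f q - dot (g q) (p - q) - mu / 2 * dot (p - q) (p - q)) /\
  (f p - f q - dot (g q) (p - q) - mu / 2 * dot (p - q) (p - q)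
        <= (L - mu) / 2 * dot (p - q) (p - q)) /\
  (dot (g p - g q - mu *: (p - q)) (g p - g q - mu *: (p - q)) <=
        2 * (L - mu) * (f p - f q - dot (g q) (p - q) - mu / 2 * dot (p - q) (p - q))).
Proof.
move=> muL Hi Hii p q.
have nE : q - p = - (p - q) by rewrite opprB.
have e1 : g q - g p - mu *: (q - p) = - (g p - g q - mu *: (p - q)).
  by apply/rowP => i; rewrite !mxE; ring.
have a1 := Dq_ge0 f g mu Hi p q.
have a2 := Dq_le f g mu L Hii p q.
have a3 := interp f g mu L muL Hi Hii p q.
have b1 := Dq_ge0 f g mu Hi q p.
have b2 := Dq_le f g mu L Hii q p.
have b3 := interp f g mu L muL Hi Hii q p.
rewrite /Dq e1 dotNN in a3.
rewrite /Dq nE dotNr dotNN in a1 a2 a3.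
rewrite /Dq in b1 b2 b3.
split; [lra|split; [lra|split; [lra|split; [lra|split; lra]]]].
Qed.

Lemma lip_sq n k (x : 'rV[R]_n) (y : 'rV[R]_k) (c : R) :
  0 <= c -> enorm x <= c * enorm y -> dot x x <= c ^+ 2 * dot y y.
Proof.
move=> c0 h; rewrite -!enorm2.
have := enorm_ge0 x; have := enorm_ge0 y; nra.
Qed.
End Glue.

Local Close Scope classical_set_scope.

Lemma le_ring_l (R : realType) (x y z : R) : y = x -> y <= z -> x <= z.
Proof. by move=> ->. Qed.
Lemma le_ring_r (R : realType) (x y z : R) : x <= y -> y = z -> x <= z.
Proof. by move=> h <-. Qed.

Theorem theorem2p2 (R : realType) (n m : nat) (Lx Ly Lxy mux muy : R)
  (F : 'rV[R]_n -> 'rV[R]_m -> R) (xs : 'rV[R]_n) (ys : 'rV[R]_m)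
  (t : R) (x1 : 'rV[R]_n) (y1 : 'rV[R]_m) :
  0 < Lx -> 0 < Ly -> 0 <= Lxy ->
  0 < mux -> mux <= Lx -> 0 < muy -> muy <= Ly ->
  in_class F Lx Ly Lxy mux muy ->
  saddle_point F xs ys ->
  let L := Num.max Lx Ly in
  let mu := Num.min mux muy in
  0 < t -> t < 2 * mu / (mu * L + Lxy ^+ 2) ->
  let x2 := x1 - t *: gradx F x1 y1 in
  let y2 := y1 + t *: grady F x1 y1 in
  let alpha := 1 + 2^-1 * (L ^+ 2 + mu ^+ 2 + 2 * Lxy ^+ 2) * t ^+ 2 - (L + mu) * t
      + 2^-1 * (L - mu) * t * Num.sqrt ((L * t + mu * t - 2) ^+ 2 + 4 * Lxy ^+ 2 * t ^+ 2) in
  enorm (x2 - xs) ^+ 2 + enorm (y2 - ys) ^+ 2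
    <= alpha * (enorm (x1 - xs) ^+ 2 + enorm (y1 - ys) ^+ 2).
Proof.
move=> hLx hLy hl hmux hmuxL hmuy hmuyL [Hdiff [HLx [HLy [HLxy1 [HLxy2 [Hcx Hcy]]]]]]
  Hsp L mu t0 _.
cbv zeta.
have mu0 : 0 < mu by rewrite /mu lt_min hmux hmuy.
have mumux : mu <= mux by rewrite /mu ge_min lexx.
have mumuy : mu <= muy by rewrite /mu ge_min lexx orbT.
have LxL : Lx <= L by rewrite /L le_max lexx.
have LyL : Ly <= L by rewrite /L le_max lexx orbT.
have muL : mu <= L by apply: le_trans mumux (le_trans hmuxL LxL).
clearbody L mu.
have BX : forall y,
  (forall x z, F x y + dot (gradx F x y) (z - x) + mu / 2 * enorm (z - x) ^+ 2 <= F z y) /\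
  (forall x z, F z y <= F x y + dot (gradx F x y) (z - x) + L / 2 * enorm (z - x) ^+ 2).
  move=> y.
  apply: (@block_facts R n (fun x => F x y) (fun x => gradx F x y) mux Lx mu L).
  - by move=> x d; apply: diff_derivable; exact: diffx.
  - by move=> x d; rewrite (@derive_grad R n _ x d (@diffx R n m F Hdiff y x)).
  - exact: ltW.
  - exact: mumux.
  - exact: LxL.
  - exact: ltW.
  - exact: Hcx.
  - by move=> a c; exact: HLx.
have BY : forall x,
  (forall y z, - F x y + dot (- grady F x y) (z - y) + mu / 2 * enorm (z - y) ^+ 2 <= - F x z) /\
  (forall y z, - F x z <= - F x y + dot (- grady F x y) (z - y) + L / 2 * enorm (z - y) ^+ 2).
  move=> x.
  apply: (@block_facts R m (fun y => - F x y) (fun y => - grady F x y) muy Ly mu L).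
  - move=> y d.
    have h : derivable (fun y' => F x y') y d by apply: diff_derivable; exact: diffy.
    exact: (derivableN h).
  - move=> y d.
    have h : derivable (fun y' => F x y') y d by apply: diff_derivable; exact: diffy.
    rewrite (_ : (fun y' => - F x y') = - (fun y' => F x y')) //.
    by rewrite deriveN // (@derive_grad R m _ y d (@diffy R n m F Hdiff x y)) dotNl.
  - exact: ltW.
  - exact: mumuy.
  - exact: LyL.
  - exact: ltW.
  - move=> a c l l0 l1; have := Hcy x a c l l0 l1; rewrite /= !opprD //.
  - move=> a c.
    have -> : - grady F x c - - grady F x a = - (grady F x c - grady F x a).
      by apply/rowP => i; rewrite !mxE; ring.
    rewrite enormN; exact: HLy.
have gx0 : gradx F xs ys = 0.
  apply: (@grad_zero R n (fun x => F x ys) (fun x => gradx F x ys) L xs).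
  - exact: lt_le_trans mu0 muL.
  - exact: (BX ys).2.
  - by move=> x; exact: (Hsp x ys).2.
have gy0 : grady F xs ys = 0.
  apply/eqP; rewrite -oppr_eq0; apply/eqP.
  apply: (@grad_zero R m (fun y => - F xs y) (fun y => - grady F xs y) L ys).
  - exact: lt_le_trans mu0 muL.
  - exact: (BY xs).2.
  - by move=> y; rewrite lerN2; exact: (Hsp xs y).1.
have [a1 [a2 [a3 [a4 [a5 a6]]]]] :=
  @pair_facts R n _ _ mu L muL (BX y1).1 (BX y1).2 x1 xs.
have [b1 [b2 [b3 [b4 [b5 b6]]]]] :=
  @pair_facts R n _ _ mu L muL (BX ys).1 (BX ys).2 x1 xs.
have [c1 [c2 [c3 [c4 [c5 c6]]]]] :=
  @pair_facts R m _ _ mu L muL (BY x1).1 (BY x1).2 y1 ys.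
have [e1 [e2 [e3 [e4 [e5 e6]]]]] :=
  @pair_facts R m _ _ mu L muL (BY xs).1 (BY xs).2 y1 ys.
move: a1 a2 a3 a4 a5 a6 b1 b2 b3 b4 b5 b6 c1 c2 c3 c4 c5 c6 e1 e2 e3 e4 e5 e6.
rewrite gx0 gy0 /= !oppr0 !dot0l !subr0 !addr0 !dotNl.
have vQ : - grady F x1 y1 - - grady F x1 ys - mu *: (y1 - ys)
    = grady F x1 ys - grady F x1 y1 - mu *: (y1 - ys).
  by apply/rowP => i; rewrite !mxE; ring.
have vV : - grady F xs y1 - mu *: (y1 - ys) = - (grady F xs y1 + mu *: (y1 - ys)).
  by apply/rowP => i; rewrite !mxE; ring.
rewrite vQ vV dotNN.
move=> a1 a2 a3 a4 a5 a6 b1 b2 b3 b4 b5 b6 c1 c2 c3 c4 c5 c6 e1 e2 e3 e4 e5 e6.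
have L1 : dot (gradx F xs y1) (gradx F xs y1) <= Lxy ^+ 2 * dot (y1 - ys) (y1 - ys).
  by have := HLxy1 xs ys y1; rewrite gx0 subr0 => h; exact: lip_sq hl h.
have L2 : dot (gradx F x1 y1 - gradx F x1 ys) (gradx F x1 y1 - gradx F x1 ys)
    <= Lxy ^+ 2 * dot (y1 - ys) (y1 - ys).
  by have h := HLxy1 x1 ys y1; exact: lip_sq hl h.
have L3 : dot (grady F x1 ys) (grady F x1 ys) <= Lxy ^+ 2 * dot (x1 - xs) (x1 - xs).
  by have := HLxy2 xs x1 ys; rewrite gy0 subr0 => h; exact: lip_sq hl h.
have L4 : dot (grady F xs y1 - grady F x1 y1) (grady F xs y1 - grady F x1 y1)
    <= Lxy ^+ 2 * dot (x1 - xs) (x1 - xs).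
  have := HLxy2 x1 xs y1; rewrite -[xs - x1]opprB enormN => h; exact: lip_sq hl h.
set X := (1 - t * (mu + L) / 2) ^+ 2 + t ^+ 2 * Lxy ^+ 2.
have X0 : 0 <= X by rewrite /X addr_ge0 // ?sqr_ge0 // mulr_ge0 // sqr_ge0.
have sqE : Num.sqrt ((L * t + mu * t - 2) ^+ 2 + 4 * Lxy ^+ 2 * t ^+ 2) = 2 * Num.sqrt X.
  have -> : (L * t + mu * t - 2) ^+ 2 + 4 * Lxy ^+ 2 * t ^+ 2 = 2 ^+ 2 * X.
    by rewrite /X; field.
  by rewrite sqrtrM ?sqr_ge0 // sqrtr_sqr ger0_norm.
rewrite sqE.
have sE : Num.sqrt X ^+ 2 = X by rewrite sqr_sqrtr.
have -> : 1 + 2^-1 * (L ^+ 2 + mu ^+ 2 + 2 * Lxy ^+ 2) * t ^+ 2 - (L + mu) * t +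
   2^-1 * (L - mu) * t * (2 * Num.sqrt X) = (Num.sqrt X + t * (L - mu) / 2) ^+ 2.
  by rewrite sqrrD sE /X; field.
have ex : x1 - t *: gradx F x1 y1 - xs = (x1 - xs) - t *: gradx F x1 y1.
  by apply/rowP => i; rewrite !mxE; ring.
have ey : y1 + t *: grady F x1 y1 - ys = (y1 - ys) + t *: grady F x1 y1.
  by apply/rowP => i; rewrite !mxE; ring.
rewrite ex ey !enorm2 /X.
apply: (@final_alg R n m (x1 - xs) (gradx F x1 y1) (gradx F xs y1) (gradx F x1 ys)
  (y1 - ys) (grady F x1 y1) (grady F xs y1) (grady F x1 ys)
  (F xs ys) (F x1 y1) (F xs y1) (F x1 ys) mu L Lxy t
  _ _ _ _ _ _ _ _ (ltW mu0) muL hl t0 erefl erefl erefl erefl erefl erefl erefl erefl).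
- exact: a1.
- exact: a2.
- exact: a4.
- exact: a5.
- exact: b4.
- exact: b5.
- exact: b1.
- exact: b2.
- by apply: le_ring_r c1 _; ring.
- by apply: le_ring_l _ c2; ring.
- by apply: le_ring_r c4 _; ring.
- by apply: le_ring_l _ c5; ring.
- by apply: le_ring_r e4 _; ring.
- by apply: le_ring_l _ e5; ring.
- by apply: le_ring_r e1 _; ring.
- by apply: le_ring_l _ e2; ring.
- exact: a3.
- exact: a6.
- exact: b6.
- exact: b3.
- by apply: le_ring_r c3 _; ring.
- by apply: le_ring_r c6 _; ring.
- by apply: le_ring_r e6 _; ring.
- by apply: le_ring_r e3 _; ring.
- exact: L1.
- exact: L2.
- exact: L3.
- exact: L4.
Qed.
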